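(* Let $\rho$ be a state of a $d$-dimensional system ($d<\infty$), let $A,B$ be two copies of this system with $\rho_A=\rho_B=\rho$, and let $j\neq0$ be an integer. Let $d^{(j)}:=\dim\mathcal{V}^{(j)}_{\rm in}$, where $\mathcal{V}^{(j)}_{\rm in}:=\mathrm{span}\{|n+j,m\rangle\langle n,m|\}_{n,m}$ (over all $n,m$ with $n,n+j,m\in\{0,\dots,d-1\}$). Then $$\Delta M_A^{(j)}\le\big\|(\rho_A\otimes\rho_B)^{(j)}\big\|_{d^{(j)}\text{-KF}}-\|\rho^{(j)}\|_1.$$
   Context: Local observable $L=\sum_{n=0}^{d-1}n|n\rangle\langle n|$ on each system, $L_{AB}=L\otimes\mathbb{I}+\mathbb{I}\otimes L$. For a single system, $\rho^{(j)}:=\sum_{n}|n+j\rangle\langle n+j|\rho|n\rangle\langle n|$ (terms with $n+j$ out of range omitted). For the bipartite system, the $j$th mode is $X^{(j)}:=\sum_c\Pi_{c+j}X\Pi_c$, with $\Pi_c$ the projector onto the eigenvalue-$c$ eigenspace of $L_{AB}$. $M^{(j)}(\sigma):=\|\sigma^{(j)}\|_1$ (trace norm). $\Delta M_A^{(j)}:=\max_{V_{AB}}M^{(j)}(\sigma_A)-M^{(j)}(\rho)$, with $\sigma_A=\mathrm{tr}_B[V_{AB}(\rho\otimes\rho)V_{AB}^\dagger]$ and the maximum over all unitaries with $[V_{AB},L_{AB}]=0$. For an operator $P$, $\|P\|_{\alpha\text{-KF}}$ is the Ky-Fan $\alpha$-norm, the sum of the $\alpha$ largest singular values of $P$. *)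

(* Defs.v *)
From HB Require Import structures.
From mathcomp Require Import all_boot all_order all_algebra.
From mathcomp Require Import complex mxtens.
From mathcomp Require Import boolp classical_sets reals.
From Stdlib Require Import ClassicalEpsilon.
Set Implicit Arguments. Unset Strict Implicit. Unset Printing Implicit Defensive.
Import Order.TTheory GRing.Theory Num.Theory.
Local Open Scope ring_scope.
Local Open Scope complex_scope.

Section QDefs.
Variable R : realType.
Local Notation C := R[i].

Definition adj m n (A : 'M[C]_(m, n)) : 'M[C]_(n, m) := \matrix_(i, j) (A j i)^*.

Definition unitary n (U : 'M[C]_n) : Prop := U *m adj U = 1%:M /\ adj U *m U = 1%:M.

Definition is_state n (rho : 'M[C]_n) : Prop :=
  adj rho = rho /\ (forall v : 'cV[C]_n, 0 <= (adj v *m rho *m v) 0 0) /\ \tr rho = 1.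

Definition is_svd n (P : 'M[C]_n) (s : 'I_n -> R) : Prop :=
  (forall i, 0 <= s i) /\ (forall i k : 'I_n, (i <= k)%N -> s k <= s i) /\
  exists U W : 'M[C]_n, unitary U /\ unitary W /\
     P = U *m diag_mx (\row_i ((s i)%:C)) *m W.

Definition singvals n (P : 'M[C]_n) : 'I_n -> R :=
  epsilon (inhabits (fun _ => 0)) (is_svd P).

Definition kyfan n (alpha : nat) (P : 'M[C]_n) : R :=
  \sum_(i < n | (i < alpha)%N) singvals P i.

Definition trnorm n (P : 'M[C]_n) : R := kyfan n P.

Definition Lop d : 'M[C]_d := diag_mx (\row_(k < d) (k%:R : C)).
Definition LAB d : 'M[C]_(d * d) := Lop d *t 1%:M + 1%:M *t Lop d.

(* j-th mode of a single-system operator: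
   rho^(j) = sum_n |n+j><n+j| rho |n><n| *)
Definition mode1 d (j : int) (rho : 'M[C]_d) : 'M[C]_d :=
  \matrix_(a, b) (if a%:Z == b%:Z + j then rho a b else 0).

(* projector onto the eigenvalue-c eigenspace of L_AB (L_AB is diagonal in the
   product basis |n,m>, with eigenvalue n+m) *)
Definition PiAB d (c : int) : 'M[C]_(d * d) :=
  diag_mx (\row_k (if ((mxtens_unindex k).1 + (mxtens_unindex k).2)%:Z == c
                   then 1 else 0)).

Definition mode2 d (j : int) (X : 'M[C]_(d * d)) : 'M[C]_(d * d) :=
  \sum_(c < (2 * d)%N) PiAB d (c%:Z + j) *m X *m PiAB d c%:Z.

Definition ptrB d (X : 'M[C]_(d * d)) : 'M[C]_d :=
  \matrix_(a, b) \sum_(k < d) X (mxtens_index (a, k)) (mxtens_index (b, k)).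

Definition Mj d (j : int) (sigma : 'M[C]_d) : R := trnorm (mode1 j sigma).

Definition DeltaMA d (j : int) (rho : 'M[C]_d) : R :=
  sup [set x : R | exists V : 'M[C]_(d * d),
         unitary V /\ V *m LAB d = LAB d *m V /\
         x = Mj j (ptrB (V *m (rho *t rho) *m adj V))] - Mj j rho.

(* d^(j) = dim V_in^(j), V_in^(j) = span{ |n+j,m><n,m| } *)
Definition dj d (j : int) : nat :=
  \rank (\sum_(ab : ('I_d * 'I_d) * ('I_d * 'I_d) |
                (ab.1.2 == ab.2.2) && (ab.1.1%:Z == (ab.2.1%:Z + j)%R))
          <<mxvec (delta_mx (mxtens_index ab.1) (mxtens_index ab.2) : 'M[C]_(d * d))>>)%MS.

End QDefs.

(* Main.v *)
Require Import Defs.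
From HB Require Import structures.
From mathcomp Require Import all_boot all_order all_algebra.
From mathcomp Require Import complex mxtens spectral fingroup perm ring.
From mathcomp Require Import boolp classical_sets reals.
From Stdlib Require Import ClassicalEpsilon.
Set Implicit Arguments. Unset Strict Implicit. Unset Printing Implicit Defensive.
Import Order.TTheory GRing.Theory Num.Theory.
Local Open Scope ring_scope.

Section Proof.
Variable R : realType.
Local Notation C := (R[i]).

Lemma adjE m n (A : 'M[C]_(m,n)) : adj A = map_mx Num.conj (A^T).
Proof. by apply/matrixP=> i j; rewrite !mxE. Qed.

Lemma adjK m n (A : 'M[C]_(m,n)) : adj (adj A) = A.
Proof. by apply/matrixP=> i j; rewrite !mxE conjcK. Qed.

Lemma adjM m n p (A : 'M[C]_(m,n)) (B : 'M[C]_(n,p)) : adj (A *m B) = adj B *m adj A.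
Proof. by rewrite !adjE trmx_mul map_mxM. Qed.

Lemma adj1 n : adj (1%:M : 'M[C]_n) = 1%:M.
Proof. by rewrite adjE trmx1 map_mx1. Qed.

Lemma unitaryP n (U : 'M[C]_n) : unitary U <-> U \is unitarymx.
Proof.
rewrite /unitary adjE; split=> [[h _]|/unitarymxP h]; first exact/unitarymxP.
split=> //; exact: mulmx1C.
Qed.

Lemma unitary_l n (U : 'M[C]_n) : U \is unitarymx -> U *m adj U = 1%:M.
Proof. by move/unitaryP=> []. Qed.
Lemma unitary_r n (U : 'M[C]_n) : U \is unitarymx -> adj U *m U = 1%:M.
Proof. by move/unitaryP=> []. Qed.

Lemma unitary_adj n (U : 'M[C]_n) : U \is unitarymx -> adj U \is unitarymx.
Proof. by move=> h; apply/unitaryP; rewrite /unitary adjK; split; [apply: unitary_r|apply: unitary_l]. Qed.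

Lemma unitaryM n (U V : 'M[C]_n) : U \is unitarymx -> V \is unitarymx -> U *m V \is unitarymx.
Proof. exact: mul_unitarymx. Qed.
Lemma conjcE (x : C) : (x^*)%C = x^*. Proof. by []. Qed.
Lemma conjRC (r : R) : (r%:C%C : C)^* = r%:C%C.
Proof. by rewrite -conjcE conjc_real. Qed.
Lemma realC_neq0 (r : R) : 0 < r -> (r%:C%C : C) != 0.
Proof. move=> h; apply/eqP => /(congr1 (@complex.Re R)) /= E; by move: h; rewrite E ltxx. Qed.
Lemma conjM (x y : C) : (x * y)^* = x^* * y^*. Proof. exact: rmorphM. Qed.
Lemma conjV (x : C) : (x^-1)^* = (x^*)^-1. Proof. exact: fmorphV. Qed.
Lemma conjK (x : C) : x^*^* = x. Proof. exact: conjCK. Qed.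
Lemma svd_step1 n (P : 'M[C]_n) : exists T Q : 'M[C]_n,
  [/\ Q \is unitarymx, P = T *m Q & forall i k, i != k -> (adj T *m T) i k = 0].
Proof.
set H := adj P *m P.
have Hn : H \is normalmx.
  by apply/normalmxP; rewrite -adjE /H adjM adjK.
have /orthomx_spectralP HE := Hn.
have QU := spectral_unitarymx H.
set Q := spectralmx H in HE QU.
set D := diag_mx (spectral_diag H) in HE.
exists (P *m adj Q), Q; split=> //.
  by rewrite -mulmxA unitary_r // mulmx1.
move=> i k ik.
have -> : adj (P *m adj Q) *m (P *m adj Q) = D.
  rewrite adjM adjK !mulmxA -[Q *m adj P *m P]mulmxA -/H HE.
  rewrite invmx_unitary // -adjE !mulmxA unitary_l // mul1mx -mulmxA unitary_l //.
  by rewrite mulmx1.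
by rewrite /D mxE (negbTE ik) mulr0n.
Qed.
Lemma sort_perm n (f : 'I_n -> R) : exists p : 'S_n,
  forall i k : 'I_n, (i <= k)%N -> f (p k) <= f (p i).
Proof.
pose leT := fun x y : R => y <= x.
pose t := [tuple f i | i < n].
have hp : perm_eq (sort leT t) t by rewrite perm_sort.
have /tuple_permP [p hs] := hp.
exists p => i k ik.
have srt : sorted leT (sort leT t).
  by apply: sort_sorted => x y; rewrite /leT le_total.
have := @sorted_leq_nth _ leT _ _ 0 _ srt i k.
rewrite hs /= !inE size_map size_enum_ord !ltn_ord.
have tr : transitive leT by move=> a b c; rewrite /leT => h1 h2; exact: le_trans h2 h1.
move=> /(_ tr (fun x => lexx x) isT isT ik).
rewrite /leT !(nth_map i) -?enumT ?size_enum_ord ?ltn_ord // !nth_ord_enum.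
by rewrite !tnth_map !tnth_ord_tuple.
Qed.
Lemma adj_perm n (s : 'S_n) : adj (perm_mx s : 'M[C]_n) = perm_mx s^-1.
Proof.
rewrite adjE -tr_perm_mx; apply/matrixP=> a b; rewrite !mxE.
by case: (_ == _); rewrite ?conjC1 ?conjC0.
Qed.

Lemma perm_unitary n (s : 'S_n) : (perm_mx s : 'M[C]_n) \is unitarymx.
Proof.
by apply/unitarymxP; rewrite -adjE adj_perm -perm_mxM mulgV perm_mx1.
Qed.

Lemma rcpermE n (p : 'S_n) (A : 'M[C]_n) i k : row_perm p (col_perm p A) i k = A (p i) (p k).
Proof. by rewrite !mxE. Qed.

Lemma svd_step2 n (P : 'M[C]_n) : exists T Q : 'M[C]_n,
  [/\ Q \is unitarymx, P = T *m Q, forall i k, i != k -> (adj T *m T) i k = 0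
    & forall i k : 'I_n, (i <= k)%N -> complex.Re ((adj T *m T) k k) <= complex.Re ((adj T *m T) i i)].
Proof.
have [T [Q [QU PE Td]]] := svd_step1 P.
have [p hp] := sort_perm (fun i => complex.Re ((adj T *m T) i i)).
have E : adj (col_perm p T) *m col_perm p T = row_perm p (col_perm p (adj T *m T)).
  by rewrite !col_permE row_permE adjM adj_perm invgK !mulmxA.
exists (col_perm p T), (row_perm p Q); split.
- by rewrite row_permE unitaryM // perm_unitary.
- by rewrite col_permE row_permE mulmxA -[_ *m perm_mx p]mulmxA -perm_mxM mulVg perm_mx1 mulmx1.
- by move=> i k ik; rewrite E rcpermE Td // (inj_eq perm_inj).
- by move=> i k ik; rewrite E !rcpermE; apply: hp.
Qed.
Lemma rowip m n (A B : 'M[C]_(m,n)) a b :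
  (row a A *m adj (row b B)) 0 0 = (A *m adj B) a b.
Proof. by rewrite !mxE; apply: eq_bigr => k _; rewrite !mxE. Qed.

Lemma adjZ m n (c : C) (A : 'M[C]_(m,n)) : adj (c *: A) = c^* *: adj A.
Proof. by apply/matrixP=> i j; rewrite !mxE rmorphM. Qed.

Lemma schmidt_fix n (N : 'M[C]_n) (pos : pred 'I_n) :
  (forall i l : 'I_n, (l <= i)%N -> pos i -> pos l) ->
  (forall i l, pos i -> pos l -> (N *m adj N) i l = (i == l)%:R) ->
  forall i, pos i -> row i (schmidt N) = row i N.
Proof.
move=> pre ort.
set S := schmidt N.
have SU : S \is unitarymx by apply: schmidt_unitarymx.
have SS := unitary_l SU.
have SS' := unitary_r SU.
suff H : forall m (i : 'I_n), (i < m)%N -> pos i -> row i S = row i N.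
  by move=> i; apply: (H i.+1).
elim=> [//|m IH] i lim pi.
set v := row i N.
have vE : v = (v *m adj S) *m S by rewrite -mulmxA SS' mulmx1.
have c_zero : forall l : 'I_n, l != i -> (v *m adj S) 0 l = 0.
  move=> l li; case: (ltnP l i) => [lti | ilt].
  - have pl : pos l by apply: (pre i l (ltnW lti)).
    have el : row l S = row l N by apply: IH => //; apply: leq_trans lti lim.
    have -> : (v *m adj S) 0 l = (row i N *m adj (row l S)) 0 0.
      by rewrite !mxE; apply: eq_bigr => k _; rewrite !mxE.
    by rewrite el rowip ort // eq_sym (negbTE li).
  - have := row_schmidt_sub N i; rewrite -/S => /sub_sums_genmxP [u_ uE].
    rewrite /v uE mulmx_suml summxE big1 // => k ki.
    rewrite -mulmxA -row_mul SS mxE big_ord1 !mxE.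
    have -> : (k == l) = false.
      by apply/negbTE; apply: contraTneq ki => ->; rewrite -ltnNge ltn_neqAle ilt andbT eq_sym.
    by rewrite mulr0.
have vc : v = ((v *m adj S) 0 i) *: row i S.
  rewrite {1}vE mulmx_sum_row (bigD1 i) //= big1 ?addr0 // => l li.
  by rewrite c_zero // scale0r.
set c := (v *m adj S) 0 i in vc.
have cge : 0 <= c.
  have := form1_row_schmidt N i; rewrite dotmxE -adjE -/S.
  suff -> : c = (row i N *m adj (row i S)) 0 0 by [].
  by rewrite /c !mxE; apply: eq_bigr => k _; rewrite !mxE.
have c1 : c * c^* = 1.
  have := ort i i pi pi; rewrite eqxx -rowip -/v.
  rewrite {1 2}vc adjZ -scalemxAl -scalemxAr scalerA [in X in X = _ -> _]mxE rowip SS mxE eqxx mulr1.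
  by move=> ->.
have ceq : c = 1.
  apply/eqP; rewrite -(sqrp_eq1 cge) expr2; apply/eqP.
  by move: c1; rewrite (conj_Creal (ger0_real cge)).
by rewrite vc ceq scale1r.
Qed.
Lemma svd_exists n (P : 'M[C]_n) : exists s, is_svd P s.
Proof.
have [T [Q [QU PE Td Tdec]]] := svd_step2 P.
pose nu i := complex.Re ((adj T *m T) i i).
have Tii_ge0 i : 0 <= (adj T *m T) i i.
  rewrite mxE; apply: sumr_ge0 => k _; rewrite mxE mulrC conjcE; exact: mul_conjC_ge0.
have Tii i : (adj T *m T) i i = (nu i)%:C%C.
  by rewrite /nu RRe_real // ger0_real.
have nu_ge0 i : 0 <= nu i by rewrite -ler0c -Tii.
pose sg i := Num.sqrt (nu i).
pose pos := [pred i | 0 < sg i].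
pose N := \matrix_(i, k) (if 0 < sg i then (T k i)^* / (sg i)%:C%C else 0) : 'M[C]_n.
have pre : forall i l : 'I_n, (l <= i)%N -> pos i -> pos l.
  move=> i l li; rewrite !inE => h; apply: lt_le_trans h _; apply: ler_wsqrtr; exact: Tdec.
have ort : forall i l, pos i -> pos l -> (N *m adj N) i l = (i == l)%:R.
  move=> i l; rewrite !inE => pi pl.
  transitivity ((adj T *m T) i l / ((sg i)%:C%C * (sg l)%:C%C)).
    rewrite !mxE mulr_suml; apply: eq_bigr => k _; rewrite !mxE pi pl !conjcE.
    rewrite conjM conjV conjK conjRC invfM; ring.
  case: (eqVneq i l) => [<-|il].
    rewrite Tii /= -(sqr_sqrtr (nu_ge0 i)) -/(sg i) expr2 rmorphM /=.
    by rewrite divff // mulf_neq0 // realC_neq0.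
  by rewrite Td //; exact: mul0r.
have rowfix := schmidt_fix pre ort.
set S := schmidt N in rowfix.
exists sg; split; first by move=> i; exact: sqrtr_ge0.
split; first by move=> i k ik; apply: ler_wsqrtr; exact: Tdec.
exists (adj S), Q; split.
  apply/unitaryP; apply: unitary_adj; exact: schmidt_unitarymx.
split; first by apply/unitaryP.
rewrite PE; congr (_ *m _); apply/matrixP => k i; rewrite mul_mx_diag !mxE conjcE.
case: (boolP (pos i)) => pi.
  have := congr1 (fun r : 'rV[C]_n => r 0 k) (rowfix i pi); rewrite !mxE => ->.
  move: pi; rewrite inE => pi; rewrite pi ?conjcE conjM conjV conjK conjRC.
  by rewrite mulfVK // realC_neq0.
have sg0 : sg i = 0.
  by apply/eqP; rewrite eq_le sqrtr_ge0 andbT leNgt; exact: pi.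
have nu0 : nu i = 0.
  by apply/eqP; rewrite eq_le nu_ge0 andbT -sqrtr_eq0 -/(sg i) sg0.
rewrite sg0 mulr0.
have : (adj T *m T) i i = 0 by rewrite Tii nu0.
rewrite mxE => hs.
have hge : forall t : 'I_n, true -> 0 <= (adj T) i t * T t i.
  by move=> t _; rewrite mxE mulrC conjcE; exact: mul_conjC_ge0.
have := psumr_eq0P hge hs (i:=k) isT; rewrite mxE conjcE.
by move/eqP; rewrite mulf_eq0 conjC_eq0 orbb => /eqP ->.
Qed.

Lemma singvals_svd n (P : 'M[C]_n) : is_svd P (singvals P).
Proof. by rewrite /singvals; apply: epsilon_spec; exact: svd_exists. Qed.
Lemma kyfan_elem (K : numDomainType) n (sg c : 'I_n -> K) (r : nat) :
  (forall i, 0 <= sg i) -> (forall i k : 'I_n, (i <= k)%N -> sg k <= sg i) ->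
  (forall i, 0 <= c i) -> (forall i, c i <= 1) -> \sum_i c i <= r%:R ->
  \sum_i sg i * c i <= \sum_(i < n | (i < r)%N) sg i.
Proof.
move=> sg0 sgd c0 c1 cs.
have E1 : \sum_(i < n | (i < r)%N) sg i = \sum_i sg i * (i < r)%:R.
  by rewrite big_mkcond; apply: eq_bigr => i _; case: ifP; rewrite ?mulr1 ?mulr0.
rewrite E1.
case: (ltnP r n) => [rn | nr]; last first.
  apply: ler_sum => i _; have -> : (i < r)%N by apply: leq_trans (ltn_ord i) nr.
  by rewrite mulr1 ler_piMr.
pose t := sg (Ordinal rn).
have ind : \sum_(i < n) ((i < r)%:R : K) = r%:R.
  transitivity (\sum_(i < n | (i < r)%N) (1 : K)).
    by rewrite [RHS]big_mkcond; apply: eq_bigr => i _; case: ifP.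
  by rewrite -(big_ord_widen _ (fun _ => 1) (ltnW rn)) sumr_const card_ord.
rewrite -subr_ge0 -sumrB.
have H : 0 <= \sum_(i < n) t * ((i < r)%:R - c i).
  rewrite -mulr_sumr sumrB ind; apply: mulr_ge0; first exact: sg0.
  by rewrite subr_ge0.
apply: le_trans H _.
apply: ler_sum => i _; rewrite -mulrBr -subr_ge0 -mulrBl.
case: (ltnP i r) => ir.
  apply: mulr_ge0; first by rewrite subr_ge0; apply: sgd; exact: ltnW.
  by rewrite subr_ge0.
apply: mulr_le0; first by rewrite subr_le0; apply: sgd.
by rewrite sub0r oppr_le0.
Qed.
Definition sm d (k : 'I_(d * d)) : nat := ((mxtens_unindex k).1 + (mxtens_unindex k).2)%N.

Lemma sm_idx d (a b : 'I_d) : sm (mxtens_index (a, b)) = (a + b)%N.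
Proof. by rewrite /sm mxtens_indexK. Qed.

Lemma LAB_diag d : LAB R d = diag_mx (\row_k ((sm k)%:R : C)).
Proof.
apply/matrixP=> k l; rewrite /LAB.
rewrite -[k]mxtens_unindexK -[l]mxtens_unindexK.
case: (mxtens_unindex k) => a b; case: (mxtens_unindex l) => a' b'.
rewrite [LHS]mxE !tensmxE !mxE sm_idx.
rewrite (inj_eq (can_inj (@mxtens_indexK d d))) xpair_eqE.
case: (a == a'); case: (b == b');
  by rewrite /= ?mulr1n ?mulr0n ?mulr1 ?mul1r ?mulr0 ?mul0r ?addr0 ?add0r ?natrD.
Qed.

Lemma comm_block d (V : 'M[C]_(d * d)) : V *m LAB R d = LAB R d *m V ->
  forall x s, V x s != 0 -> sm x = sm s.
Proof.
rewrite LAB_diag mul_mx_diag mul_diag_mx => /matrixP h x s Vxs.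
have := h x s; rewrite !mxE => /eqP; rewrite mulrC -subr_eq0 -mulrBl mulf_eq0 (negbTE Vxs) orbF.
by rewrite subr_eq0 eqr_nat => /eqP.
Qed.

Lemma sm_lt d (k : 'I_(d * d)) : (sm k < 2 * d)%N.
Proof.
rewrite /sm; case: (mxtens_unindex k) => a b /=.
by rewrite mul2n -addnn; exact: (leq_add (ltn_ord a) (ltnW (ltn_ord b))).
Qed.

Lemma mode2E d j (X : 'M[C]_(d * d)) s t :
  mode2 j X s t = if (sm s)%:Z == (sm t)%:Z + j then X s t else 0.
Proof.
rewrite /mode2 summxE (bigD1 (Ordinal (sm_lt t))) //= big1 ?addr0.
  by rewrite /PiAB mul_mx_diag mul_diag_mx !mxE -/(sm s) -/(sm t) eqxx mulr1; case: ifP; rewrite ?mul1r ?mul0r.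
move=> c ct; rewrite /PiAB mul_mx_diag mul_diag_mx !mxE -/(sm t).
suff -> : ((sm t)%:Z == c%:Z) = false by rewrite mulr0.
apply/negbTE; apply: contra ct => /eqP [] e; apply/eqP/val_inj => /=; by rewrite e.
Qed.
Lemma mode_conj d j (V X : 'M[C]_(d * d)) x y : V *m LAB R d = LAB R d *m V ->
  (sm x)%:Z = (sm y)%:Z + j ->
  (V *m X *m adj V) x y = (V *m mode2 j X *m adj V) x y.
Proof.
move=> hV hxy; rewrite !mxE; apply: eq_bigr => t _; rewrite !mxE.
case: (eqVneq (V y t) 0) => [->|Vyt]; first by rewrite conjcE conjC0 !mulr0.
congr (_ * _); apply: eq_bigr => s _.
case: (eqVneq (V x s) 0) => [->|Vxs]; first by rewrite !mul0r.
by rewrite mode2E -(comm_block hV Vxs) -(comm_block hV Vyt) hxy eqxx.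
Qed.

Definition condP d (j : int) : pred (('I_d * 'I_d) * ('I_d * 'I_d)) :=
  fun p => (p.1.2 == p.2.2) && (p.1.1%:Z == (p.2.1%:Z + j)%R).

Lemma condP_sm d j p : @condP d j p ->
  (sm (mxtens_index p.1))%:Z = (sm (mxtens_index p.2))%:Z + j.
Proof.
case: p => [[a k] [b k']] /andP [/eqP /= e1 /eqP /= e2].
by rewrite !sm_idx e1 !PoszD e2 addrAC.
Qed.

Lemma trace_id d j (M : 'M[C]_d) (Z : 'M[C]_(d * d)) :
  \tr (M *m mode1 j (ptrB Z)) = \sum_(p | @condP d j p)
     M p.2.1 p.1.1 * Z (mxtens_index p.1) (mxtens_index p.2).
Proof.
pose F := fun (a b k k' : 'I_d) => if (k == k') && (a%:Z == b%:Z + j)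
  then M b a * Z (mxtens_index (a, k)) (mxtens_index (b, k')) else 0.
have R1 : \sum_(p | @condP d j p) M p.2.1 p.1.1 * Z (mxtens_index p.1) (mxtens_index p.2)
   = \sum_a \sum_k \sum_b \sum_k' F a b k k'.
  transitivity (\sum_(p1 : 'I_d * 'I_d) \sum_(p2 : 'I_d * 'I_d) F p1.1 p2.1 p1.2 p2.2).
    by rewrite big_mkcond [RHS]pair_big /=; apply: eq_bigr => [[[a k] [b k']]] _.
  rewrite [RHS]pair_big /=; apply: eq_bigr => [[a k]] _ /=.
  by rewrite [RHS]pair_big /=; apply: eq_bigr => [[b k']] _.
have col : forall a b k, \sum_k' F a b k k' =
    if a%:Z == b%:Z + j then M b a * Z (mxtens_index (a, k)) (mxtens_index (b, k)) else 0.
  move=> a b k; rewrite (bigD1 k) //= big1 ?addr0; first by rewrite /F eqxx.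
  by move=> k' kk'; rewrite /F eq_sym (negbTE kk').
rewrite R1 /mxtrace.
under eq_bigr => b _ do rewrite mxE.
rewrite exchange_big /=; apply: eq_bigr => a _.
rewrite [RHS]exchange_big /=; apply: eq_bigr => b _.
under [RHS]eq_bigr => k _ do rewrite col.
rewrite !mxE; case: ifP => _; first by rewrite mulr_sumr.
by rewrite mulr0 big1.
Qed.
Lemma mxvec_index_inj m n (i i' : 'I_m) (j j' : 'I_n) :
  mxvec_index i j = mxvec_index i' j' -> i = i' /\ j = j'.
Proof.
move=> e; have := mxvecE (delta_mx i j : 'M[C]_(m,n)) i' j'; rewrite -e mxvecE !mxE !eqxx /=.
move/eqP; rewrite eqr_nat.
by case: (i' =P i) => [->|?]; case: (j' =P j) => [->|?].
Qed.

Lemma rank_delta_ge (I : finType) (P : pred I) m (f : I -> 'I_m) : {in P &, injective f} ->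
  (#|P| <= \rank (\sum_(i | P i) <<delta_mx ord0 (f i) : 'rV[C]_m>>)%MS)%N.
Proof.
move=> finj.
pose E := \matrix_(k < #|P|) (delta_mx 0 (f (enum_val k)) : 'rV[C]_m).
have EE : E *m E^T = 1%:M.
  apply/matrixP=> k k'; rewrite !mxE.
  rewrite (bigD1 (f (enum_val k))) //= big1 ?addr0.
    rewrite !mxE !eqxx /= mul1r.
    have -> : (f (enum_val k) == f (enum_val k')) = (k == k').
      apply/eqP/eqP => [h|->//]; apply: enum_val_inj; apply: finj h; exact: enum_valP.
    by rewrite eq_sym.
  by move=> t tk; rewrite !mxE (negbTE tk) mul0r.
have : (#|P| <= \rank E)%N.
  by rewrite -{1}(mxrank1 C #|P|) -EE mxrankM_maxl.
move/leq_trans; apply.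
apply: mxrankS; apply/row_subP => k; rewrite rowK.
apply: (sumsmx_sup (enum_val k)); first exact: enum_valP.
by rewrite genmxE.
Qed.

Lemma dj_ge d j : (#|@condP d j| <= dj R d j)%N.
Proof.
rewrite /dj.
under eq_bigr => ab _ do rewrite mxvec_delta.
apply: (rank_delta_ge (P := @condP d j) (f := fun ab => mxvec_index (mxtens_index ab.1) (mxtens_index ab.2))).
move=> a b _ _ /mxvec_index_inj [/(can_inj (@mxtens_indexK d d)) e1 /(can_inj (@mxtens_indexK d d)) e2].
by case: a b e1 e2 => [? ?] [? ?] /= -> ->.
Qed.

Lemma unit_row n (F : 'M[C]_n) x : F \is unitarymx -> \sum_i `|F x i| ^+ 2 = 1.
Proof.
move=> FU; transitivity ((F *m adj F) x x); last by rewrite unitary_l // mxE eqxx.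
by rewrite mxE; apply: eq_bigr => i _; rewrite normCK !mxE.
Qed.

Lemma unit_col n (F : 'M[C]_n) i : F \is unitarymx -> \sum_x `|F x i| ^+ 2 = 1.
Proof.
move=> FU; transitivity ((adj F *m F) i i); last by rewrite unitary_r // mxE eqxx.
by rewrite mxE; apply: eq_bigr => x _; rewrite normCK !mxE mulrC.
Qed.

Lemma sum_inj_le (I J : finType) (P : pred I) (u : I -> J) (f : J -> C) :
  {in P &, injective u} -> (forall x, 0 <= f x) ->
  \sum_(p | P p) f (u p) <= \sum_x f x.
Proof.
move=> uinj f0.
have -> : \sum_(p | P p) f (u p) = \sum_(x in [set u p | p in P]) f x by rewrite big_imset.
rewrite [X in _ <= X](bigID (mem [set u p | p in P])) /= lerDl.
by apply: sumr_ge0 => x _; exact: f0.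
Qed.

Lemma norm_amgm (x y : C) : `|x * y| <= (`|x| ^+ 2 + `|y| ^+ 2) / 2%:R.
Proof.
rewrite ler_pdivlMr ?ltr0n // normrM mulr_natr.
have hr : `|x| - `|y| \is Num.real by rewrite rpredB // normr_real.
have : 0 <= (`|x| - `|y|) ^+ 2 by rewrite -(real_normK hr) exprn_ge0.
by move=> h; rewrite -subr_ge0; apply: le_trans h _; rewrite sqrrB addrAC.
Qed.
Lemma condP_inj1 d j : {in @condP d j &, injective (fun p => mxtens_index p.1)}.
Proof.
move=> [[a k] [b k']] [[a2 k2] [b2 k2']].
rewrite !unfold_in /condP /= => /andP [/eqP e1 /eqP e2] /andP [/eqP e3 /eqP e4].
move=> /(can_inj (@mxtens_indexK d d)) [ea ek].
have eb : (b : nat) = b2.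
  by apply/eqP; rewrite -eqz_nat; apply/eqP; apply: (addIr j); rewrite -e2 -e4 ea.
by rewrite -e1 -e3 ea ek (ord_inj eb).
Qed.

Lemma condP_inj2 d j : {in @condP d j &, injective (fun p => mxtens_index p.2)}.
Proof.
move=> [[a k] [b k']] [[a2 k2] [b2 k2']].
rewrite !unfold_in /condP /= => /andP [/eqP e1 /eqP e2] /andP [/eqP e3 /eqP e4].
move=> /(can_inj (@mxtens_indexK d d)) [eb ek].
have ea : (a : nat) = a2.
  by apply/eqP; rewrite -eqz_nat; apply/eqP; rewrite e2 e4 eb.
by rewrite e1 e3 eb ek (ord_inj ea).
Qed.

Lemma realC_sum (I : finType) (P : pred I) (f : I -> R) :
  (\sum_(i | P i) f i)%:C%C = \sum_(i | P i) ((f i)%:C%C : C).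
Proof. exact: rmorph_sum. Qed.
Lemma main_bound d j (M : 'M[C]_d) (V X : 'M[C]_(d * d)) (s : 'I_(d * d) -> R) :
  M \is unitarymx -> V \is unitarymx -> V *m LAB R d = LAB R d *m V ->
  is_svd (mode2 j X) s ->
  `|\tr (M *m mode1 j (ptrB (V *m X *m adj V)))| <=
     (\sum_(i < d * d | (i < #|@condP d j|)%N) s i)%:C%C.
Proof.
move=> MU VU hV [s0 [sdec [U' [W' [U'u [W'u YE]]]]]].
move/unitaryP: U'u => U'u; move/unitaryP: W'u => W'u.
set P := @condP d j.
pose u := fun p : ('I_d * 'I_d) * ('I_d * 'I_d) => mxtens_index p.1.
pose w := fun p : ('I_d * 'I_d) * ('I_d * 'I_d) => mxtens_index p.2.
pose F := V *m U'. pose G := W' *m adj V.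
have FU : F \is unitarymx by apply: unitaryM.
have GU : G \is unitarymx by apply: unitaryM => //; exact: unitary_adj.
have sC0 : forall i, 0 <= ((s i)%:C%C : C) by move=> i; rewrite ler0c.
have ZE : forall p, P p -> (V *m X *m adj V) (u p) (w p) =
    \sum_i F (u p) i * (s i)%:C%C * G i (w p).
  move=> p Pp; rewrite (mode_conj _ hV (condP_sm Pp)) YE.
  have -> : V *m (U' *m diag_mx (\row_i (s i)%:C%C) *m W') *m adj V =
            F *m diag_mx (\row_i (s i)%:C%C) *m G by rewrite !mulmxA.
  by rewrite mxE; apply: eq_bigr => i _; rewrite mul_mx_diag !mxE.
rewrite trace_id.
rewrite (eq_bigr (fun p => M p.2.1 p.1.1 * \sum_i F (u p) i * (s i)%:C%C * G i (w p)));
  last by move=> p Pp; rewrite -ZE.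
have mle : forall p : ('I_d * 'I_d) * ('I_d * 'I_d), `|M p.2.1 p.1.1| <= 1.
  move=> p; rewrite -(@expr_le1 _ 2) // -(unit_row p.2.1 MU) (bigD1 p.1.1) //= lerDl.
  by apply: sumr_ge0 => a _; exact: exprn_ge0.
apply: le_trans (ler_norm_sum _ _ _) _.
apply: le_trans (_ : _ <= \sum_(p | P p) \sum_i (s i)%:C%C * (`|F (u p) i| * `|G i (w p)|)) _.
  apply: ler_sum => p Pp; rewrite normrM.
  apply: le_trans (ler_wpM2r (normr_ge0 _) (mle p)) _; rewrite mul1r.
  apply: le_trans (ler_norm_sum _ _ _) _; apply: ler_sum => i _.
  by rewrite !normrM (ger0_norm (sC0 i)) mulrAC mulrC.
rewrite exchange_big /=.
pose c i := \sum_(p | P p) (`|F (u p) i| ^+ 2 + `|G i (w p)| ^+ 2) / 2%:R.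
apply: le_trans (_ : _ <= \sum_i (s i)%:C%C * c i) _.
  apply: ler_sum => i _; rewrite /c mulr_sumr; apply: ler_sum => p _.
  by apply: ler_wpM2l => //; rewrite -normrM; exact: norm_amgm.
rewrite realC_sum.
apply: (kyfan_elem (sg := fun i => (s i)%:C%C)).
- exact: sC0.
- by move=> i k ik; rewrite lecR; apply: sdec.
- by move=> i; apply: sumr_ge0 => p _; apply: divr_ge0; rewrite ?ler0n // addr_ge0 // exprn_ge0.
- move=> i; rewrite /c -mulr_suml big_split /= ler_pdivrMr ?ltr0n // mul1r.
  have -> : (2%:R : C) = 1 + 1 by [].
  apply: lerD.
    rewrite -(unit_col i FU); apply: (sum_inj_le (u := u) (f := fun x => `|F x i| ^+ 2)).
      exact: condP_inj1.
    by move=> x; exact: exprn_ge0.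
  rewrite -(unit_row i GU); apply: (sum_inj_le (u := w) (f := fun x => `|G i x| ^+ 2)).
    exact: condP_inj2.
  by move=> x; exact: exprn_ge0.
- rewrite /c exchange_big /=.
  under eq_bigr => p _ do rewrite -mulr_suml big_split /= (unit_row (u p) FU) (unit_col (w p) GU).
  have -> : ((1 + 1) / 2%:R : C) = 1 by rewrite -[(1 + 1 : C)]/(2%:R : C) divff // pnatr_eq0.
  rewrite (@eq_bigl _ _ _ _ _ _ (fun p => p \in P)) //.
  by rewrite sumr_const.
Qed.
Lemma trnorm_bound d j (rho : 'M[C]_d) (V : 'M[C]_(d * d)) :
  V \is unitarymx -> V *m LAB R d = LAB R d *m V ->
  trnorm (mode1 j (ptrB (V *m (rho *t rho) *m adj V))) <= kyfan (dj R d j) (mode2 j (rho *t rho)).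
Proof.
move=> VU hV.
set A := mode1 j _.
have [s0 [sdec [U [W [Uu [Wu AE]]]]]] := singvals_svd A.
move/unitaryP: Uu => Uu; move/unitaryP: Wu => Wu.
set Mm := adj W *m adj U.
have MU : Mm \is unitarymx by apply: unitaryM; apply: unitary_adj.
have trE : \tr (Mm *m A) = (trnorm A)%:C%C.
  rewrite /trnorm /kyfan realC_sum {1}AE.
  rewrite /Mm -!mulmxA [adj U *m _]mulmxA unitary_r // mul1mx mxtrace_mulC.
  rewrite -mulmxA unitary_l // mulmx1 mxtrace_diag.
  by rewrite [RHS]big_mkcond; apply: eq_bigr => i _; rewrite ltn_ord mxE.
have trge : 0 <= \tr (Mm *m A).
  by rewrite trE ler0c /trnorm /kyfan; apply: sumr_ge0 => i _; exact: s0.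
have h1 := main_bound (s := singvals (mode2 j (rho *t rho))) MU VU hV (singvals_svd _).
rewrite -lecR -trE -(ger0_norm trge); apply: le_trans h1 _; rewrite lecR.
rewrite /kyfan [X in _ <= X]big_mkcond [X in X <= _]big_mkcond /=; apply: ler_sum => i _.
have [sv0 _] := singvals_svd (mode2 j (rho *t rho)).
case: ifP => h; first by rewrite (leq_trans h (dj_ge d j)).
by case: ifP => _ //; exact: sv0.
Qed.
End Proof.

Theorem mainTheorem5 (R : realType) (d : nat) (rho : 'M[R[i]]_d) (j : int) :
  is_state rho -> j != 0 ->
  DeltaMA j rho <= kyfan (dj R d j) (mode2 j (rho *t rho)) - trnorm (mode1 j rho).
Proof.
move=> _ _; rewrite /DeltaMA /Mj lerD2r.
apply: ge_sup.
  exists (trnorm (mode1 j (ptrB (1%:M *m (rho *t rho) *m adj 1%:M)))), 1%:M.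
  split; first by rewrite /unitary adj1 mulmx1.
  by split; [rewrite mulmx1 mul1mx|].
move=> x [V [VU [Vc ->]]]; apply: trnorm_bound => //; exact/unitaryP.
Qed.
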